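(* If a dual-convex $m\times n$ net in $I^3$ is infinitesimally flexible in $I^3$, then it has a nontrivial infinitesimal isotropic isometric deformation consisting of isotropic vectors (vectors parallel to the $z$-axis).
   Context: $I^3$ is $\mathbb{R}^3$ with coordinates $(x,y,z)$; isotropic = parallel to the $z$-axis; top view $\overline P$ of $P=(x,y,z)$ is $(x,y)$. Metric duality: point $P=(P^1,P^2,P^3)\leftrightarrow$ plane $P^*\colon z=P^1x+P^2y-P^3$. Infinitesimal isotropic congruence: vector field $V(\mathbf x)=a\mathbf x+\mathbf b$, $\mathbf b\in\mathbb R^3$, $a=\begin{pmatrix}0&-\phi&0\\ \phi&0&0\\ c_1&c_2&0\end{pmatrix}$. An $m\times n$ net: points $F_{ij}$, $0\le i\le m,0\le j\le n$, with $F_{ij},F_{i+1,j},F_{i+1,j+1},F_{i,j+1}$ consecutive vertices of a convex planar quadrilateral (face $p_{ij}$) for all $0\le i<m,0\le j<n$. Boundary vertices: $i\in\{0,m\}$ or $j\in\{0,n\}$; consecutive faces around non-boundary $F_{ij}$: $p_{i-1,j-1},p_{i,j-1},p_{ij},p_{i-1,j}$. Convex 4-hedral angle with vertex $O$: union of rays from $O$ meeting a convex quadrilateral in a plane not through $O$; flat angles: rays through one side; admissible: isotropic line through $O$ meets its interior. Dual-convex: $m,n\ge2$ and at each non-boundary vertex the four consecutive face planes are planes of four consecutive flat angles of an admissible convex 4-hedral angle. Curvature at non-boundary vertex with consecutive faces $p_1..p_4$: $\Omega=\frac12\sum_{k=1}^4\det(\overline{p_k^*},\overline{p_{k+1}^*})$,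 $p_5=p_1$. An infinitesimal isotropic isometric deformation of a dual-convex net $F_{ij}$ is a collection $V_{ij}\in\mathbb R^3$ such that (face condition) for each face $p_{kl}$ there is an infinitesimal isotropic congruence $V$ with $V_{ij}=V(F_{ij})$ at its four vertices, and (vertex condition) $\frac{d}{dt}\Omega(F_{ij}+tV_{ij})|_{t=0}=0$ for each non-boundary vertex. It is trivial if one infinitesimal isotropic congruence $V$ satisfies $V_{ij}=V(F_{ij})$ for all $i,j$. The net is infinitesimally flexible in $I^3$ if it has a nontrivial one. *)

(* Defs.v *)
From HB Require Import structures.
From mathcomp Require Import all_boot all_order all_algebra.
From mathcomp Require Import all_classical all_reals all_analysis.
Set Implicit Arguments. Unset Strict Implicit. Unset Printing Implicit Defensive.
Import Order.TTheory GRing.Theory Num.Theory.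
Import numFieldNormedType.Exports.
Local Open Scope ring_scope.

Section IsotropicNets.
Variable R : realType.

Definition pt := (R * R * R)%type.
Definition px (p : pt) : R := p.1.1.
Definition py (p : pt) : R := p.1.2.
Definition pz (p : pt) : R := p.2.
Definition pzero : pt := (0, 0, 0).
Definition padd (p q : pt) : pt := (px p + px q, py p + py q, pz p + pz q).
Definition psub (p q : pt) : pt := (px p - px q, py p - py q, pz p - pz q).
Definition pscale (t : R) (p : pt) : pt := (t * px p, t * py p, t * pz p).
Definition cross (p q : pt) : pt :=
  (py p * pz q - pz p * py q, pz p * px q - px p * pz q, px p * py q - py p * px q).
Definition dot (p q : pt) : R := px p * px q + py p * py q + pz p * pz q.
Definition det3 (p q r : pt) : R := dot (cross p q) r.
Definition ez : pt := (0, 0, 1).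

(* Convex (nondegenerate) planar quadrilateral with consecutive vertices A,B,C,D:
   the four points are coplanar and all four turns are nonzero and have the
   same orientation (w.r.t. the plane normal). *)
Definition turn (A B C : pt) : pt := cross (psub B A) (psub C B).
Definition convex_quad (A B C D : pt) : Prop :=
  det3 (psub B A) (psub C A) (psub D A) = 0 /\
  turn A B C <> pzero /\
  0 < dot (turn A B C) (turn B C D) /\
  0 < dot (turn A B C) (turn C D A) /\
  0 < dot (turn A B C) (turn D A B).

(* m x n net: F i j, 0 <= i <= m, 0 <= j <= n (values outside are irrelevant). *)
Definition is_net (m n : nat) (F : nat -> nat -> pt) : Prop :=
  forall i j, (i < m)%N -> (j < n)%N ->
    convex_quad (F i j) (F i.+1 j) (F i.+1 j.+1) (F i j.+1).

Definition in_face (G : nat -> nat -> pt) (k l : nat) (X : pt) : Prop :=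
  det3 (psub (G k.+1 l) (G k l)) (psub (G k l.+1) (G k l)) (psub X (G k l)) = 0.

Definition in_plane3 (O A B X : pt) : Prop :=
  det3 (psub A O) (psub B O) (psub X O) = 0.

(* Convex 4-hedral angle with vertex O: rays from O through the convex
   quadrilateral Q1Q2Q3Q4 lying in a plane not through O. *)
Definition hedral4 (O Q1 Q2 Q3 Q4 : pt) : Prop :=
  convex_quad Q1 Q2 Q3 Q4 /\ det3 (psub Q2 Q1) (psub Q4 Q1) (psub O Q1) <> 0.

(* Admissible: the isotropic line through O meets the interior of the angle,
   i.e. contains a point O + lam (q - O) with lam > 0 and q in the relative
   interior of the quadrilateral (strictly positive convex combination). *)
Definition admissible (O Q1 Q2 Q3 Q4 : pt) : Prop :=
  exists (t lam w1 w2 w3 w4 : R),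
    0 < lam /\ 0 < w1 /\ 0 < w2 /\ 0 < w3 /\ 0 < w4 /\ w1 + w2 + w3 + w4 = 1 /\
    padd O (pscale t ez) =
    padd O (pscale lam (psub (padd (padd (pscale w1 Q1) (pscale w2 Q2))
                                   (padd (pscale w3 Q3) (pscale w4 Q4))) O)).

Definition face_is_flat (G : nat -> nat -> pt) (k l : nat) (O A B : pt) : Prop :=
  forall X, in_face G k l X <-> in_plane3 O A B X.

Definition dual_convex (m n : nat) (F : nat -> nat -> pt) : Prop :=
  (2 <= m)%N /\ (2 <= n)%N /\
  forall i j, (0 < i < m)%N -> (0 < j < n)%N ->
    exists Q1 Q2 Q3 Q4 : pt,
      hedral4 (F i j) Q1 Q2 Q3 Q4 /\ admissible (F i j) Q1 Q2 Q3 Q4 /\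
      face_is_flat F i.-1 j.-1 (F i j) Q1 Q2 /\
      face_is_flat F i j.-1 (F i j) Q2 Q3 /\
      face_is_flat F i j (F i j) Q3 Q4 /\
      face_is_flat F i.-1 j (F i j) Q4 Q1.

(* Top view of the dual point p^* of the plane p of face p_kl:
   the plane is z = P1 x + P2 y - P3, with normal N = (P1, P2, -1) ~ n,
   so (P1, P2) = (-n_x/n_z, -n_y/n_z). *)
Definition dual_top (G : nat -> nat -> pt) (k l : nat) : R * R :=
  let N := cross (psub (G k.+1 l) (G k l)) (psub (G k l.+1) (G k l)) in
  (- px N / pz N, - py N / pz N).

Definition det2 (a b : R * R) : R := a.1 * b.2 - a.2 * b.1.

Definition Omega (G : nat -> nat -> pt) (i j : nat) : R :=
  let d1 := dual_top G i.-1 j.-1 in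
  let d2 := dual_top G i j.-1 in
  let d3 := dual_top G i j in
  let d4 := dual_top G i.-1 j in
  (det2 d1 d2 + det2 d2 d3 + det2 d3 d4 + det2 d4 d1) / 2.

Definition iso_cong (phi c1 c2 : R) (b : pt) (x : pt) : pt :=
  (- phi * py x + px b, phi * px x + py b, c1 * px x + c2 * py x + pz b).

Definition is_inf_iso_def (m n : nat) (F V : nat -> nat -> pt) : Prop :=
  (forall k l, (k < m)%N -> (l < n)%N ->
     exists (phi c1 c2 : R) (b : pt), forall i j,
       (i = k \/ i = k.+1) -> (j = l \/ j = l.+1) ->
       V i j = iso_cong phi c1 c2 b (F i j)) /\
  (forall i j, (0 < i < m)%N -> (0 < j < n)%N ->
     is_derive (0 : R) (1 : R)
       (fun t : R => Omega (fun a c => padd (F a c) (pscale t (V a c))) i j) 0).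

Definition trivial_def (m n : nat) (F V : nat -> nat -> pt) : Prop :=
  exists (phi c1 c2 : R) (b : pt), forall i j, (i <= m)%N -> (j <= n)%N ->
    V i j = iso_cong phi c1 c2 b (F i j).

Definition inf_flexible (m n : nat) (F : nat -> nat -> pt) : Prop :=
  exists V, is_inf_iso_def m n F V /\ ~ trivial_def m n F V.

Definition isotropic (v : pt) : Prop := px v = 0 /\ py v = 0.

End IsotropicNets.

(* Main.v *)
Require Import Defs.
From HB Require Import structures.
From mathcomp Require Import all_boot all_order all_algebra.
From mathcomp Require Import all_classical all_reals all_analysis.
From mathcomp Require Import ring lra zify.
Import Order.TTheory GRing.Theory Num.Theory.

Section S.
Variable R : realType.
Local Open Scope ring_scope.
Implicit Types (p q r h a b O A B C D : pt R).

Ltac unf := rewrite /det3 /turn /cross /dot /psub /padd /pscale /iso_cong /ez /pzero /px /py /pz /=.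
Ltac destr := repeat match goal with p : pt _ |- _ => destruct p as [[? ?] ?] end.
Ltac ptring := destr; unf; first [ring | (congr (_,_,_); ring)].

Lemma par_lem a b h : cross a b = pzero R ->
  dot b h * dot a a = dot a h * dot a b.
Proof.
move: a b h => [[a1 a2] a3] [[b1 b2] b3] [[h1 h2] h3].
move=> E; apply/eqP; rewrite -subr_eq0; apply/eqP.
have -> : dot (b1, b2, b3) (h1, h2, h3) * dot (a1, a2, a3) (a1, a2, a3) -
  dot (a1, a2, a3) (h1, h2, h3) * dot (a1, a2, a3) (b1, b2, b3) =
  - (dot (cross (cross (a1, a2, a3) (b1, b2, b3)) (h1, h2, h3)) (a1, a2, a3)) by unf; ring.
by rewrite E; unf; ring.
Qed.

Lemma turn12 A B C D : det3 (psub B A) (psub C A) (psub D A) = 0 ->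
  cross (turn A B C) (turn B C D) = (pzero R).
Proof.
move=> h; have -> : cross (turn A B C) (turn B C D) =
  pscale (det3 (psub B A) (psub C A) (psub D A)) (psub C B). by ptring.
by rewrite h; ptring.
Qed.
Lemma turn13 A B C D : det3 (psub B A) (psub C A) (psub D A) = 0 ->
  cross (turn A B C) (turn C D A) = (pzero R).
Proof.
move=> h; have -> : cross (turn A B C) (turn C D A) =
  pscale (det3 (psub B A) (psub C A) (psub D A)) (psub C A) by ptring.
by rewrite h; ptring.
Qed.
Lemma turn14 A B C D : det3 (psub B A) (psub C A) (psub D A) = 0 ->
  cross (turn A B C) (turn D A B) = (pzero R).
Proof.
move=> h; have -> : cross (turn A B C) (turn D A B) =
  pscale (det3 (psub B A) (psub C A) (psub D A)) (psub B A) by ptring.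
by rewrite h; ptring.
Qed.

Lemma final_contra (s N2 wc wd Dc Dd Pc Pd : R) : s != 0 -> 0 < wc -> 0 < wd ->
  0 < Pc -> 0 < Pd -> Dc * N2 = s * Pc -> Dd * N2 = s * Pd -> wc * Dc + wd * Dd = 0 -> False.
Proof.
move=> hs hwc hwd hPc hPd hc hd hsum.
have E : s * (wc * Pc + wd * Pd) = 0.
  have -> : s * (wc * Pc + wd * Pd) = wc * (s * Pc) + wd * (s * Pd) by ring.
  rewrite -hc -hd.
  have -> : wc * (Dc * N2) + wd * (Dd * N2) = (wc * Dc + wd * Dd) * N2 by ring.
  by rewrite hsum mul0r.
move/eqP: E; rewrite mulf_eq0 (negbTE hs) /=; apply/negP.
by rewrite gt_eqF // addr_gt0 // mulr_gt0.
Qed.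

Lemma norm_pos a : a <> pzero R -> 0 < dot a a.
Proof.
move: a => [[a1 a2] a3] ha; unf.
have h1 : 0 <= a1 * a1 by rewrite -expr2 sqr_ge0.
have h2 : 0 <= a2 * a2 by rewrite -expr2 sqr_ge0.
have h3 : 0 <= a3 * a3 by rewrite -expr2 sqr_ge0.
rewrite lt_neqAle !addr_ge0 // andbT eq_sym.
apply/negP; rewrite paddr_eq0 ?addr_ge0 // paddr_eq0 // => /andP [/andP [e1 e2] e3].
apply: ha; move: e1 e2 e3; rewrite -!expr2 !sqrf_eq0 => /eqP -> /eqP -> /eqP ->.
by [].
Qed.

Lemma hed_id Q1 Q2 Q4 O : det3 (psub Q2 Q1) (psub Q4 Q1) (psub O Q1) =
  - dot (turn Q4 Q1 Q2) (psub Q1 O).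
Proof. ptring. Qed.

Definition Xw (w1 w2 w3 w4 : R) Q1 Q2 Q3 Q4 O :=
  psub (padd (padd (pscale w1 Q1) (pscale w2 Q2)) (padd (pscale w3 Q3) (pscale w4 Q4))) O.

Lemma L12 w1 w2 w3 w4 Q1 Q2 Q3 Q4 O : w1 + w2 + w3 + w4 = 1 ->
  det3 (psub Q1 O) (psub Q2 O) (Xw w1 w2 w3 w4 Q1 Q2 Q3 Q4 O) =
  w3 * dot (turn Q1 Q2 Q3) (psub Q1 O) + w4 * dot (turn Q4 Q1 Q2) (psub Q1 O).
Proof. move=> hw; have -> : w1 = 1 - w2 - w3 - w4 by rewrite -hw; ring. rewrite /Xw. ptring. Qed.
Lemma L23 w1 w2 w3 w4 Q1 Q2 Q3 Q4 O : w1 + w2 + w3 + w4 = 1 ->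
  det3 (psub Q2 Q1) (psub Q3 Q1) (psub Q4 Q1) = 0 ->
  det3 (psub Q2 O) (psub Q3 O) (Xw w1 w2 w3 w4 Q1 Q2 Q3 Q4 O) =
  w1 * dot (turn Q1 Q2 Q3) (psub Q1 O) + w4 * dot (turn Q2 Q3 Q4) (psub Q1 O).
Proof.
move=> hw hd; have -> : w1 = 1 - w2 - w3 - w4 by rewrite -hw; ring.
apply/eqP; rewrite -subr_eq0; apply/eqP; rewrite -[RHS](mulr0 w4) -hd /Xw; ptring.
Qed.
Lemma L34 w1 w2 w3 w4 Q1 Q2 Q3 Q4 O : w1 + w2 + w3 + w4 = 1 ->
  det3 (psub Q2 Q1) (psub Q3 Q1) (psub Q4 Q1) = 0 ->
  det3 (psub Q3 O) (psub Q4 O) (Xw w1 w2 w3 w4 Q1 Q2 Q3 Q4 O) =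
  w1 * dot (turn Q3 Q4 Q1) (psub Q1 O) + w2 * dot (turn Q2 Q3 Q4) (psub Q1 O).
Proof.
move=> hw hd; have -> : w1 = 1 - w2 - w3 - w4 by rewrite -hw; ring.
apply/eqP; rewrite -subr_eq0; apply/eqP; rewrite -[RHS](mulr0 w2) -hd /Xw; ptring.
Qed.
Lemma L41 w1 w2 w3 w4 Q1 Q2 Q3 Q4 O : w1 + w2 + w3 + w4 = 1 ->
  det3 (psub Q4 O) (psub Q1 O) (Xw w1 w2 w3 w4 Q1 Q2 Q3 Q4 O) =
  w2 * dot (turn Q4 Q1 Q2) (psub Q1 O) + w3 * dot (turn Q3 Q4 Q1) (psub Q1 O).
Proof. move=> hw; have -> : w1 = 1 - w2 - w3 - w4 by rewrite -hw; ring. rewrite /Xw; ptring. Qed.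

Lemma adm_lem O A B X (t lam : R) :
  padd O (pscale t (ez R)) = padd O (pscale lam X) -> in_plane3 O A B (padd O (ez R)) ->
  0 < lam -> det3 (psub A O) (psub B O) X = 0.
Proof.
rewrite /in_plane3.
case: O => [[p1 p2] p3]; case: A => [[a1 a2] a3]; case: B => [[b1 b2] b3]; case: X => [[x1 x2] x3].
unf; case=> e1 e2 e3 hp hl.
have hl0 : lam != 0 by rewrite gt_eqF.
have hx1 : x1 = 0.
  have : lam * x1 = 0 by rewrite -(addrI _ e1) mulr0.
  by move/eqP; rewrite mulf_eq0 (negbTE hl0) /= => /eqP.
have hx2 : x2 = 0.
  have : lam * x2 = 0 by rewrite -(addrI _ e2) mulr0.
  by move/eqP; rewrite mulf_eq0 (negbTE hl0) /= => /eqP.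
rewrite hx1 hx2; move: hp => hp.
have hc : (a1 - p1) * (b2 - p2) - (a2 - p2) * (b1 - p1) = 0 by rewrite -hp; ring.
rewrite hc; ring.
Qed.


Lemma no_vert O Q1 Q2 Q3 Q4 : hedral4 O Q1 Q2 Q3 Q4 -> admissible O Q1 Q2 Q3 Q4 ->
  ~ in_plane3 O Q1 Q2 (padd O (ez R)) /\ ~ in_plane3 O Q2 Q3 (padd O (ez R)) /\
  ~ in_plane3 O Q3 Q4 (padd O (ez R)) /\ ~ in_plane3 O Q4 Q1 (padd O (ez R)).
Proof.
move=> [[hcop [hT [d2 [d3 d4]]]] hhed] [t [lam [w1 [w2 [w3 [w4 [hl [hw1 [hw2 [hw3 [hw4 [hw hE]]]]]]]]]]]].
have hN := norm_pos _ hT.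
have p2 := par_lem _ _ (psub Q1 O) (turn12 _ _ _ _ hcop).
have p3 := par_lem _ _ (psub Q1 O) (turn13 _ _ _ _ hcop).
have p4 := par_lem _ _ (psub Q1 O) (turn14 _ _ _ _ hcop).
have hs : dot (turn Q1 Q2 Q3) (psub Q1 O) != 0.
  apply/eqP => hs0; apply: hhed; rewrite hed_id; move: p4; rewrite hs0 mul0r => /eqP.
  by rewrite mulf_eq0 (gt_eqF hN) orbF => /eqP ->; rewrite oppr0.
have hX : forall A B, in_plane3 O A B (padd O (ez R)) ->
   det3 (psub A O) (psub B O) (Xw w1 w2 w3 w4 Q1 Q2 Q3 Q4 O) = 0.
  by move=> A B hp; rewrite /Xw; apply: (adm_lem _ _ _ _ _ _ hE hp hl).
split; [|split; [|split]] => hp; have := hX _ _ hp.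
- rewrite L12 // => e; exact: (final_contra _ _ _ _ _ _ _ _ hs hw3 hw4 hN d4 erefl p4 e).
- rewrite L23 // => e; exact: (final_contra _ _ _ _ _ _ _ _ hs hw1 hw4 hN d2 erefl p2 e).
- rewrite L34 // => e; exact: (final_contra _ _ _ _ _ _ _ _ hs hw1 hw2 d3 d2 p3 p2 e).
- rewrite L41 // => e; exact: (final_contra _ _ _ _ _ _ _ _ hs hw2 hw3 d4 d3 p4 p3 e).
Qed.

Definition Nz (G : nat -> nat -> pt R) k l :=
  pz (cross (psub (G k.+1 l) (G k l)) (psub (G k l.+1) (G k l))).

Lemma step_nz (F : nat -> nat -> pt R) k l O Qa Qb :
  face_is_flat F k l O Qa Qb -> ~ in_plane3 O Qa Qb (padd O (ez R)) -> Nz F k l != 0.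
Proof.
move=> hf hnv; apply/eqP => hz; apply: hnv; apply/hf.
have hO : in_face F k l O by apply/hf; rewrite /in_plane3; ptring.
move: hO hz; rewrite /in_face /Nz.
have -> : forall e1 e2 G, det3 e1 e2 (psub (padd O (ez R)) G) =
   det3 e1 e2 (psub O G) + pz (cross e1 e2) by move=> *; ptring.
by move=> -> ->; rewrite addr0.
Qed.

Lemma face_nz m n (F : nat -> nat -> pt R) : dual_convex m n F ->
  forall k l, (k < m)%N -> (l < n)%N -> Nz F k l != 0.
Proof.
case=> hm [hn hd] k l hk hl.
case: k hk => [|k] hk; case: l hl => [|l] hl.
- have [Q1 [Q2 [Q3 [Q4 [hh [ha [f1 [f2 [f3 f4]]]]]]]]] := hd 1%N 1%N hm hn.
  have [n1 [n2 [n3 n4]]] := no_vert _ _ _ _ _ hh ha.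
  exact: (step_nz _ _ _ _ _ _ f1 n1).
- have [Q1 [Q2 [Q3 [Q4 [hh [ha [f1 [f2 [f3 f4]]]]]]]]] := hd 1%N l.+1 hm hl.
  have [n1 [n2 [n3 n4]]] := no_vert _ _ _ _ _ hh ha.
  exact: (step_nz _ _ _ _ _ _ f4 n4).
- have [Q1 [Q2 [Q3 [Q4 [hh [ha [f1 [f2 [f3 f4]]]]]]]]] := hd k.+1 1%N hk hn.
  have [n1 [n2 [n3 n4]]] := no_vert _ _ _ _ _ hh ha.
  exact: (step_nz _ _ _ _ _ _ f2 n2).
- have [Q1 [Q2 [Q3 [Q4 [hh [ha [f1 [f2 [f3 f4]]]]]]]]] := hd k.+1 l.+1 hk hl.
  have [n1 [n2 [n3 n4]]] := no_vert _ _ _ _ _ hh ha.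
  exact: (step_nz _ _ _ _ _ _ f3 n3).
Qed.

Lemma hor_uniq (phi b1 b2 phi' b1' b2' : R) P Q :
  (px P != px Q) || (py P != py Q) ->
  - phi * py P + b1 = - phi' * py P + b1' -> phi * px P + b2 = phi' * px P + b2' ->
  - phi * py Q + b1 = - phi' * py Q + b1' -> phi * px Q + b2 = phi' * px Q + b2' ->
  [/\ phi = phi', b1 = b1' & b2 = b2'].
Proof.
move=> hd e1 e2 e3 e4.
have hy : (phi - phi') * (py Q - py P) = 0.
  apply/eqP; rewrite -subr_eq0; apply/eqP.
  have -> : (phi - phi') * (py Q - py P) - 0 = (- phi * py P + b1 - (- phi' * py P + b1'))
     - (- phi * py Q + b1 - (- phi' * py Q + b1')) by ring.
  by rewrite e1 e3 !subrr.
have hx : (phi - phi') * (px Q - px P) = 0.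
  apply/eqP; rewrite -subr_eq0; apply/eqP.
  have -> : (phi - phi') * (px Q - px P) - 0 = (phi * px Q + b2 - (phi' * px Q + b2'))
     - (phi * px P + b2 - (phi' * px P + b2')) by ring.
  by rewrite e2 e4 !subrr.
have hp : phi = phi'.
  apply/eqP; rewrite -subr_eq0; apply/negPn/negP => hne.
  move: hd; rewrite -negb_and; apply/negP; rewrite negbK.
  move/eqP: hx; rewrite mulf_eq0 (negbTE hne) /= subr_eq0 eq_sym => ->.
  by move/eqP: hy; rewrite mulf_eq0 (negbTE hne) /= subr_eq0 eq_sym => ->.
subst phi'; split => //.
- by apply: (addrI (- phi * py P)).
- by apply: (addrI (phi * px P)).
Qed.

Lemma nz_e1 (F : nat -> nat -> pt R) k l : Nz F k l != 0 ->
  (px (F k.+1 l) != px (F k l)) || (py (F k.+1 l) != py (F k l)).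
Proof.
rewrite /Nz -negb_and; apply: contra.
move: (F k.+1 l) (F k l) (F k l.+1) => [[a1 a2] a3] [[b1 b2] b3] [[c1 c2] c3].
unf => /andP [/eqP -> /eqP ->]; apply/eqP; ring.
Qed.
Lemma nz_e2 (F : nat -> nat -> pt R) k l : Nz F k l != 0 ->
  (px (F k l.+1) != px (F k l)) || (py (F k l.+1) != py (F k l)).
Proof.
rewrite /Nz -negb_and; apply: contra.
move: (F k.+1 l) (F k l) (F k l.+1) => [[a1 a2] a3] [[b1 b2] b3] [[c1 c2] c3].
unf => /andP [/eqP -> /eqP ->]; apply/eqP; ring.
Qed.

Definition hor (V F : nat -> nat -> pt R) i j (phi b1 b2 : R) :=
  px (V i j) = - phi * py (F i j) + b1 /\ py (V i j) = phi * px (F i j) + b2.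
Definition HF (V F : nat -> nat -> pt R) k l (phi b1 b2 : R) :=
  forall i j, (i = k \/ i = k.+1) -> (j = l \/ j = l.+1) -> hor V F i j phi b1 b2.

Definition face_cond (m n : nat) (F V : nat -> nat -> pt R) :=
  forall k l, (k < m)%N -> (l < n)%N ->
     exists (phi c1 c2 : R) (b : pt R), forall i j,
       (i = k \/ i = k.+1) -> (j = l \/ j = l.+1) ->
       V i j = iso_cong phi c1 c2 b (F i j).

Lemma face_hf m n F V k l : face_cond m n F V -> (k < m)%N -> (l < n)%N ->
  exists (phi b1 b2 : R), HF V F k l phi b1 b2.
Proof.
move=> hf hk hl; have [phi [c1 [c2 [b hb]]]] := hf k l hk hl.
exists phi, (px b), (py b) => i j hi hj; rewrite /hor !hb //.
Qed.

Lemma hor2 (V F : nat -> nat -> pt R) i1 j1 i2 j2 (phi b1 b2 phi' b1' b2' : R) :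
  (px (F i1 j1) != px (F i2 j2)) || (py (F i1 j1) != py (F i2 j2)) ->
  hor V F i1 j1 phi b1 b2 -> hor V F i1 j1 phi' b1' b2' ->
  hor V F i2 j2 phi b1 b2 -> hor V F i2 j2 phi' b1' b2' ->
  [/\ phi = phi', b1 = b1' & b2 = b2'].
Proof.
move=> hd [h1 h2] [h1' h2'] [h3 h4] [h3' h4'].
apply: (hor_uniq _ _ _ _ _ _ _ _ hd).
- by rewrite -h1 -h1'.
- by rewrite -h2 -h2'.
- by rewrite -h3 -h3'.
- by rewrite -h4 -h4'.
Qed.

Arguments face_hf [m n F V k l].
Arguments hor2 [V F i1 j1 i2 j2 phi b1 b2 phi' b1' b2'].
Arguments nz_e1 [F k l]. Arguments nz_e2 [F k l].

Lemma global_hor m n (F V : nat -> nat -> pt R) : (0 < m)%N -> (0 < n)%N ->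
  (forall k l, (k < m)%N -> (l < n)%N -> Nz F k l != 0) -> face_cond m n F V ->
  exists (phi b1 b2 : R), forall k l, (k < m)%N -> (l < n)%N -> HF V F k l phi b1 b2.
Proof.
move=> hm hn hnz hf.
have [p0 [c0 [d0 h00]]] := face_hf hf hm hn.
exists p0, c0, d0.
have col0 : forall k, (k < m)%N -> HF V F k 0 p0 c0 d0.
  elim=> [|k IH] hk; first exact: h00.
  have [p [c [d h]]] := face_hf hf hk hn.
  have IH' := IH (ltnW hk).
  have [e1 e2 e3] := hor2 (nz_e2 (hnz _ _ hk hn))
    (IH' _ _ (or_intror erefl) (or_intror erefl)) (h _ _ (or_introl erefl) (or_intror erefl))
    (IH' _ _ (or_intror erefl) (or_introl erefl)) (h _ _ (or_introl erefl) (or_introl erefl)).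
  by rewrite e1 e2 e3.
move=> k l hk; elim: l => [|l IH] hl; first exact: col0.
have [p [c [d h]]] := face_hf hf hk hl.
have IH' := IH (ltnW hl).
have [e1 e2 e3] := hor2 (nz_e1 (hnz _ _ hk hl))
    (IH' _ _ (or_intror erefl) (or_intror erefl)) (h _ _ (or_intror erefl) (or_introl erefl))
    (IH' _ _ (or_introl erefl) (or_intror erefl)) (h _ _ (or_introl erefl) (or_introl erefl)).
by rewrite e1 e2 e3.
Qed.

Lemma dual_top_def (G F : nat -> nat -> pt R) (k l : nat) (t phi c1 c2 : R) (b : pt R) :
 (forall a c : nat, (a = k \/ a = k.+1) -> (c = l \/ c = l.+1) ->
    G a c = padd (F a c) (pscale t (iso_cong phi c1 c2 b (F a c)))) ->
 Nz F k l != 0 ->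
 dual_top G k l =
   (((dual_top F k l).1 + t * c1 - t * phi * ((dual_top F k l).2 + t * c2)) / (1 + (t * phi) ^+ 2),
    (t * phi * ((dual_top F k l).1 + t * c1) + ((dual_top F k l).2 + t * c2)) / (1 + (t * phi) ^+ 2)).
Proof.
move=> HG; rewrite /Nz /dual_top.
rewrite !HG; try by [left|right]. clear HG.
have hd : 1 + (t * phi) ^+ 2 != 0.
  by apply: lt0r_neq0; apply: ltr_pwDl => //; apply: sqr_ge0.
move: (F k l) (F k.+1 l) (F k l.+1) b => [[x0 y0] z0] [[x1 y1] z1] [[x2 y2] z2] [[b1 b2] b3].
unf => hN.
have hNz : (x1 + t * (- phi * y1 + b1) - (x0 + t * (- phi * y0 + b1))) *
    (y2 + t * (phi * x2 + b2) - (y0 + t * (phi * x0 + b2))) -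
    (y1 + t * (phi * x1 + b2) - (y0 + t * (phi * x0 + b2))) *
    (x2 + t * (- phi * y2 + b1) - (x0 + t * (- phi * y0 + b1))) != 0.
  have -> : (x1 + t * (- phi * y1 + b1) - (x0 + t * (- phi * y0 + b1))) *
    (y2 + t * (phi * x2 + b2) - (y0 + t * (phi * x0 + b2))) -
    (y1 + t * (phi * x1 + b2) - (y0 + t * (phi * x0 + b2))) *
    (x2 + t * (- phi * y2 + b1) - (x0 + t * (- phi * y0 + b1))) = (1 + (t * phi) ^+ 2) * ((x1 - x0) * (y2 - y0) - (y1 - y0) * (x2 - x0)).
    ring.
  by rewrite mulf_neq0.
congr pair; field; rewrite hd hN //=; exact: hNz.
Qed.

Lemma deriv_step (f g : R -> R) phi :
  is_derive (0:R) (1:R) f 0 -> (forall t, g t = f t * (1 + (t*phi)^+2)) ->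
  is_derive (0:R) (1:R) g 0.
Proof.
move=> hf hg.
have -> : g = f * ((cst 1) + (phi ^+ 2) \*: (@id R ^+ 2)).
  apply: funext => t; rewrite hg /=. congr (_ * (_ + _)). rewrite /GRing.scale /=. rewrite exprMn mulrC //.
have hh : is_derive (0:R) (1:R) ((cst 1) + (phi ^+ 2) \*: (@id R ^+ 2)) 0.
  apply: is_derive_eq.
  by rewrite /= expr1 !(mulr0, mul0r, scaler0, scale0r, add0r, addr0).
apply: (is_derive_eq (is_deriveM hf hh)).
by rewrite !(scaler0, scale0r, addr0).
Qed.

Definition dt (t phi : R) (P : R * R) (c1 c2 : R) : R * R :=
  ((P.1 + t * c1 - t * phi * (P.2 + t * c2)) / (1 + (t * phi) ^+ 2),
   (t * phi * (P.1 + t * c1) + (P.2 + t * c2)) / (1 + (t * phi) ^+ 2)).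

Lemma Omega_rel (G G' : nat -> nat -> pt R) (i j : nat) (t phi : R) (P1 P2 P3 P4 : R * R)
   (c11 c12 c21 c22 c31 c32 c41 c42 : R) :
  dual_top G i j = dt t phi P1 c11 c12 ->
  dual_top G i.+1 j = dt t phi P2 c21 c22 ->
  dual_top G i.+1 j.+1 = dt t phi P3 c31 c32 ->
  dual_top G i j.+1 = dt t phi P4 c41 c42 ->
  dual_top G' i j = dt t 0 P1 c11 c12 ->
  dual_top G' i.+1 j = dt t 0 P2 c21 c22 ->
  dual_top G' i.+1 j.+1 = dt t 0 P3 c31 c32 ->
  dual_top G' i j.+1 = dt t 0 P4 c41 c42 ->
  Omega G' i.+1 j.+1 = Omega G i.+1 j.+1 * (1 + (t * phi) ^+ 2).
Proof.
case: P1 => [x1 y1]; case: P2 => [x2 y2]; case: P3 => [x3 y3]; case: P4 => [x4 y4].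
move=> h1 h2 h3 h4 h1' h2' h3' h4'.
rewrite /Omega /= h1 h2 h3 h4 h1' h2' h3' h4'.
have hd : 1 + (t * phi) ^+ 2 != 0.
  by apply: lt0r_neq0; apply: ltr_pwDl => //; apply: sqr_ge0.
have hd0 : 1 + (t * 0) ^+ 2 != 0 by rewrite mulr0 expr0n addr0 oner_neq0.
rewrite /dt /det2 /=; field.
exact: hd.
Qed.

Lemma hor_of (V F : nat -> nat -> pt R) (i j : nat) (phi c1 c2 : R) (b : pt R) :
  V i j = iso_cong phi c1 c2 b (F i j) -> hor V F i j phi (px b) (py b).
Proof. by move=> h; rewrite /hor h. Qed.

End S.

Arguments face_nz [R m n F].
Arguments global_hor [R m n F V].
Arguments hor_of [R V F i j phi c1 c2 b].
Arguments hor2 [R V F i1 j1 i2 j2 phi b1 b2 phi' b1' b2'].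
Arguments nz_e1 [R F k l]. Arguments nz_e2 [R F k l].
Arguments deriv_step [R f g phi].
Arguments dual_top_def [R G F k l t phi c1 c2 b].

Theorem lemma3 (R : realType) (m n : nat) (F : nat -> nat -> pt R) :
  is_net m n F -> dual_convex m n F -> inf_flexible m n F ->
  exists V : nat -> nat -> pt R,
    is_inf_iso_def m n F V /\ ~ trivial_def m n F V /\
    (forall i j, (i <= m)%N -> (j <= n)%N -> isotropic (V i j)).
Proof.
move=> _ hdc [V [[hface hvert] hnt]].
have [hm2 [hn2 _]] := hdc.
have hnz := face_nz hdc.
pose V' := fun i j => (0%R, 0%R, pz (V i j)) : pt R.
have hV' : forall (phi c1 c2 : R) (b : pt R) (i j : nat),
    V i j = iso_cong phi c1 c2 b (F i j) ->
    V' i j = iso_cong 0%R c1 c2 (0%R, 0%R, pz b) (F i j).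
  move=> phi c1 c2 b i j h; rewrite /V' h /iso_cong /px /py /pz /=.
  by rewrite oppr0 !mul0r !addr0.
exists V'; split; [split|split].
- move=> k l hk hl; have [phi [c1 [c2 [b hb]]]] := hface k l hk hl.
  by exists 0%R, c1, c2, (0%R, 0%R, pz b) => i j hi hj; apply: hV'; apply: hb.
- move=> i j /andP [hi0 him] /andP [hj0 hjn].
  case: i hi0 him => [//|i] _ him; case: j hj0 hjn => [//|j] _ hjn.
  have hi' : (i < m)%N := ltnW him.
  have hj' : (j < n)%N := ltnW hjn.
  have [p1 [c11 [c12 [b1 h1]]]] := hface i j hi' hj'.
  have [p2 [c21 [c22 [b2 h2]]]] := hface i.+1 j him hj'.
  have [p3 [c31 [c32 [b3 h3]]]] := hface i.+1 j.+1 him hjn.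
  have [p4 [c41 [c42 [b4 h4]]]] := hface i j.+1 hi' hjn.
  have [e12 _ _] := hor2 (nz_e2 (hnz i.+1 j him hj'))
    (hor_of (h1 i.+1 j.+1 (or_intror erefl) (or_intror erefl)))
    (hor_of (h2 i.+1 j.+1 (or_introl erefl) (or_intror erefl)))
    (hor_of (h1 i.+1 j (or_intror erefl) (or_introl erefl)))
    (hor_of (h2 i.+1 j (or_introl erefl) (or_introl erefl))).
  have [e23 _ _] := hor2 (nz_e1 (hnz i.+1 j.+1 him hjn))
    (hor_of (h2 i.+2 j.+1 (or_intror erefl) (or_intror erefl)))
    (hor_of (h3 i.+2 j.+1 (or_intror erefl) (or_introl erefl)))
    (hor_of (h2 i.+1 j.+1 (or_introl erefl) (or_intror erefl)))
    (hor_of (h3 i.+1 j.+1 (or_introl erefl) (or_introl erefl))).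
  have [e34 _ _] := hor2 (nz_e2 (hnz i.+1 j.+1 him hjn))
    (hor_of (h3 i.+1 j.+2 (or_introl erefl) (or_intror erefl)))
    (hor_of (h4 i.+1 j.+2 (or_intror erefl) (or_intror erefl)))
    (hor_of (h3 i.+1 j.+1 (or_introl erefl) (or_introl erefl)))
    (hor_of (h4 i.+1 j.+1 (or_intror erefl) (or_introl erefl))).
  subst p2 p3 p4.
  apply: (deriv_step (hvert i.+1 j.+1 him hjn)) => t.
  apply: Omega_rel.
  + apply: (dual_top_def _ (hnz i j hi' hj')) => a c ha hc; by rewrite h1.
  + apply: (dual_top_def _ (hnz i.+1 j him hj')) => a c ha hc; by rewrite h2.
  + apply: (dual_top_def _ (hnz i.+1 j.+1 him hjn)) => a c ha hc; by rewrite h3.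
  + apply: (dual_top_def _ (hnz i j.+1 hi' hjn)) => a c ha hc; by rewrite h4.
  + apply: (dual_top_def _ (hnz i j hi' hj')) => a c ha hc; by rewrite (hV' _ _ _ _ _ _ (h1 a c ha hc)).
  + apply: (dual_top_def _ (hnz i.+1 j him hj')) => a c ha hc; by rewrite (hV' _ _ _ _ _ _ (h2 a c ha hc)).
  + apply: (dual_top_def _ (hnz i.+1 j.+1 him hjn)) => a c ha hc; by rewrite (hV' _ _ _ _ _ _ (h3 a c ha hc)).
  + apply: (dual_top_def _ (hnz i j.+1 hi' hjn)) => a c ha hc; by rewrite (hV' _ _ _ _ _ _ (h4 a c ha hc)).
- move=> [ph [c1 [c2 [b htr]]]]; apply: hnt.
  have hm0 : (0 < m)%N by lia.
  have hn0 : (0 < n)%N by lia.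
  have [p0 [be1 [be2 hg]]] := global_hor hm0 hn0 hnz hface.
  exists p0, c1, c2, (be1, be2, pz b) => i j hi hj.
  have [k [hk hik]] : exists k, (k < m)%N /\ (i = k \/ i = k.+1).
    case: (ltnP i m) => h; first by exists i; split => //; left.
    by exists m.-1; split; [lia | right; lia].
  have [l [hl hjl]] : exists l, (l < n)%N /\ (j = l \/ j = l.+1).
    case: (ltnP j n) => h; first by exists j; split => //; left.
    by exists n.-1; split; [lia | right; lia].
  have [hx hy] := hg k l hk hl i j hik hjl.
  have hz := htr i j hi hj.
  move: hx hy hz; rewrite /V'; case: (V i j) => [[v1 v2] v3].
  rewrite /iso_cong /px /py /pz /= => -> -> [_ _ ->].
  by [].
- by move=> i j _ _; split.
Qed.
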